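(* Let $k\ge3$ be odd, $p\in[0,1]$ and $q\in[0,1]$, and consider the mean-field Node-Majority process on the infinite tree $\mathcal T$ with root $v_0$ started from i.i.d. initial states with $\Pr(x_v^{(0)}=\mathcal R)=q$. Then $$\lim_{t\to\infty}\Pr(x_{v_0}^{(t)}=\mathcal R)=\begin{cases}\hat\varphi^+_{p,k} & \text{if } p<p_k^\star \text{ and } q>\hat\varphi^-_{p,k},\\ 0 & \text{if } p<p_k^\star\text{ and } q<\hat\varphi^-_{p,k},\\ 0 & \text{if } p>p_k^\star.\end{cases}$$
   Context: $\mathcal T$ is the infinite rooted tree with root $v_0$ in which every vertex has exactly $k$ children. Each vertex $v$ has a state $x_v^{(t)}\in\{\mathcal R,\mathcal B\}$ at each round $t\in\mathbb N_0$. At $t=0$ each vertex is $\mathcal R$ with probability $q$ independently. For $t\ge0$, each vertex $v$ independently of everything else becomes $\mathcal B$ at round $t+1$ with probability $p$; otherwise $x_v^{(t+1)}$ is the majority among the states $x_w^{(t)}$ of its $k$ children. Let $F_{p,k}(x)=\Pr[\mathrm{Bin}(k,(1-p)x)\ge(k+1)/2]$ and $\widehat F_{p,k}(x)=(1-p)\Pr[\mathrm{Bin}(k,x)\ge(k+1)/2]$ for $x\in[0,1]$. $p_k^\star\in[1/9,1/2)$ is the (unique) value such that for $0\le p<p_k^\star$ the equation $F_{p,k}(x)=x$ on $[0,1]$ has exactly three solutions, for $p=p_k^\star$ exactly two, and for $p>p_k^\star$ only $0$. For $0\le p<p_k^\star$ the equation $\widehat F_{p,k}(x)=x$ on $[0,1]$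 has exactly three solutions $0<\hat\varphi^-_{p,k}<\hat\varphi^+_{p,k}$. *)

(* Defs.v *)
From HB Require Import structures.
From mathcomp Require Import all_boot all_order all_algebra.
From mathcomp Require Import all_classical all_reals all_analysis.
Set Implicit Arguments. Unset Strict Implicit. Unset Printing Implicit Defensive.
Import Order.TTheory GRing.Theory Num.Theory.
Local Open Scope ring_scope.

Definition binom_tail {R : realType} (k : nat) (y : R) : R :=
  \sum_(i < k.+1 | ((k.+1)./2 <= i)%N) ('C(k, i))%:R * y ^+ i * (1 - y) ^+ (k - i).

Definition F_pk {R : realType} (p : R) (k : nat) (x : R) : R :=
  binom_tail k ((1 - p) * x).

Definition hatF_pk {R : realType} (p : R) (k : nat) (x : R) : R :=
  (1 - p) * binom_tail k x.

Definition exactly_n_fixpoints {R : realType} (f : R -> R) (n : nat) : Prop :=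
  exists s : seq R, uniq s /\ size s = n /\
    forall x : R, ((0 <= x <= 1) /\ f x = x) <-> x \in s.

Definition is_pstar {R : realType} (k : nat) (ps : R) : Prop :=
  1 / 9 <= ps < 1 / 2 /\
  (forall p : R, 0 <= p < ps -> exactly_n_fixpoints (F_pk p k) 3) /\
  exactly_n_fixpoints (F_pk ps k) 2 /\
  (forall p : R, ps < p <= 1 ->
     forall x : R, ((0 <= x <= 1) /\ F_pk p k x = x) <-> x = 0).

(** The mean-field Node-Majority process, restricted to the finite part of
    the randomness that determines the root state at round t.
    Vertices of the k-ary tree are words over 'I_k; the children of w are
    the words i :: w.  words k t lists all vertices of depth <= t. *)
Fixpoint words (k t : nat) : seq (seq 'I_k) :=
  match t with
  | 0 => [:: [::]]
  | t'.+1 => [::] :: [seq i :: w | i <- enum 'I_k, w <- words k t']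
  end.

Definition vert (k t : nat) := seq_sub (words k t).

(** An outcome assigns one boolean to each vertex w of depth d <= t:
    - if d = t, it is the initial state of w (true = R), drawn w.p. q;
    - if d < t, it is the coin "w becomes B at round t - d", drawn w.p. p.
    These are exactly the independent variables on which x_{v0}^{(t)}
    depends. *)
Definition outcome (k t : nat) := {ffun vert k t -> bool}.

Definition look (k t : nat) (om : outcome k t) (w : seq 'I_k) : bool :=
  match @insub _ (fun x => x \in words k t) (vert k t) w with
  | Some v => om v
  | None => false
  end.

Definition majority (k : nat) (s : seq bool) : bool := ((k.+1)./2 <= count id s)%N.

(** state om w s = x_w^{(s)} (true = R), for w at depth t - s. *)
Fixpoint state (k t : nat) (om : outcome k t) (w : seq 'I_k) (s : nat) : bool :=
  match s with
  | 0 => look om w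
  | s'.+1 => ~~ look om w && majority k [seq state om (i :: w) s' | i <- enum 'I_k]
  end.

Definition weight {R : realType} (p q : R) (k t : nat) (om : outcome k t) : R :=
  \prod_(v : vert k t)
    (if size (val v) == t then (if om v then q else 1 - q)
     else (if om v then p else 1 - p)).

Definition root_red_prob {R : realType} (p q : R) (k t : nat) : R :=
  \sum_(om : outcome k t) weight p q om * (if state om [::] t then 1 else 0).

(* Main.v *)
Require Import Defs.
From HB Require Import structures.
From mathcomp Require Import all_boot all_order all_algebra.
From mathcomp Require Import all_classical all_reals all_analysis.
Import Order.TTheory GRing.Theory Num.Theory.
Local Open Scope classical_set_scope.
Local Open Scope ring_scope.

From mathcomp Require Import ring lra.

Module Helpers.
Import numFieldNormedType.Exports.
Local Close Scope classical_set_scope.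

Lemma mem_words k t w : (w \in words k t) = (size w <= t)%N.
Proof.
elim: t w => [|t IH] [|i w] /=.
- by rewrite inE.
- by rewrite inE.
- by rewrite in_cons eqxx.
- rewrite in_cons /= ltnS -IH; apply/allpairsP/idP => [[[j u] /= [_ Hu [E1 E2]]]|Hw]; first by rewrite E2.
  by exists (i, w); rewrite mem_enum.
Qed.

Lemma words_uniq k t : uniq (words k t).
Proof.
elim: t => //= t IH; apply/andP; split.
  by apply/allpairsP => -[[j u] /= [_ _ E]].
apply: allpairs_uniq => //; first exact: enum_uniq.
by move=> [a b] [c d] _ _ /= [-> ->].
Qed.

Lemma big_vert (T : Type) (idx : T) (op : Monoid.law idx) k t (F : seq 'I_k -> T) :
  \big[op/idx]_(v : vert k t) F (val v) = \big[op/idx]_(w <- words k t) F w.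
Proof.
rewrite -[in RHS](val_seq_sub_enum (words_uniq k t)) big_map.
by rewrite /index_enum !unlock.
Qed.

Lemma look_val k t (om : outcome k t) (v : vert k t) : look om (val v) = om v.
Proof. by rewrite /look valK. Qed.

Lemma look_out k t (om : outcome k t) w : (size w > t)%N -> look om w = false.
Proof. by move=> H; rewrite /look insubN // mem_words -ltnNge. Qed.

Definition wt {R : realType} (p q : R) k t (g : seq 'I_k -> bool) : R :=
  \prod_(w <- words k t)
    (if size w == t then (if g w then q else 1 - q) else (if g w then p else 1 - p)).

Arguments wt {R} p q {k} t g.

Lemma weight_wt {R : realType} (p q : R) k t (om : outcome k t) :
  weight p q om = wt p q t (look om).
Proof.
rewrite /weight /wt -big_vert; apply: eq_bigr => v _; by rewrite look_val.
Qed.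

Fixpoint stateg k (g : seq 'I_k -> bool) (w : seq 'I_k) (s : nat) : bool :=
  match s with
  | 0 => g w
  | s'.+1 => ~~ g w && majority k [seq stateg k g (i :: w) s' | i <- enum 'I_k]
  end.

Arguments stateg {k} g w s.

Lemma state_g k t (om : outcome k t) w s : state om w s = stateg (look om) w s.
Proof.
elim: s w => //= s IH w; congr (_ && _); congr (majority _ _).
by apply: eq_map => i; rewrite IH.
Qed.

Definition Gbf k t (b : bool) (f : {ffun 'I_k -> outcome k t}) (w : seq 'I_k) : bool :=
  match rev w with [::] => b | i :: w' => look (f i) (rev w') end.

Definition bwd k t (bf : bool * {ffun 'I_k -> outcome k t}) : outcome k t.+1 :=
  [ffun v => @Gbf k t bf.1 bf.2 (val v)].

Definition fwd k t (om : outcome k t.+1) : bool * {ffun 'I_k -> outcome k t} :=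
  (look om [::], [ffun i => [ffun v : vert k t => look om (rcons (val v) i)]]).

Arguments Gbf {k t} b f w.
Arguments bwd {k t} bf.
Arguments fwd {k t} om.

Lemma Gbf_rcons k t b f w i : @Gbf k t b f (rcons w i) = look (f i) w.
Proof. by rewrite /Gbf rev_rcons revK. Qed.

Lemma look_bwd k t (bf : bool * {ffun 'I_k -> outcome k t}) w :
  look (bwd bf) w = Gbf bf.1 bf.2 w.
Proof.
case: (boolP (w \in words k t.+1)) => Hw.
  by rewrite -[w]/(val (Sub w Hw : vert k t.+1)) look_val ffunE.
move: Hw; rewrite mem_words -ltnNge => Hw; rewrite look_out //.
move: Hw; case/lastP: w => [//|w i]; rewrite size_rcons ltnS => Hw.
by rewrite Gbf_rcons look_out.
Qed.

Lemma look_fwd k t (om : outcome k t.+1) i w :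
  look ((fwd om).2 i) w = look om (rcons w i).
Proof.
case: (boolP (w \in words k t)) => Hw.
  by rewrite -[w]/(val (Sub w Hw : vert k t)) look_val /= !ffunE.
move: Hw; rewrite mem_words -ltnNge => Hw; by rewrite !look_out // size_rcons ltnS.
Qed.

Lemma fwdK k t : cancel (@fwd k t) (@bwd k t).
Proof.
move=> om; apply/ffunP => v; rewrite ffunE -look_val.
case/lastP: (val v) => [//|w i]; by rewrite Gbf_rcons look_fwd.
Qed.

Lemma bwdK k t : cancel (@bwd k t) (@fwd k t).
Proof.
move=> [b f]; rewrite /fwd look_bwd /=; congr (_, _).
apply/ffunP => i; apply/ffunP => v; by rewrite !ffunE look_bwd Gbf_rcons look_val.
Qed.

Lemma words_perm k t :
  perm_eq (words k t.+1) ([::] :: [seq rcons w i | w <- words k t, i <- enum 'I_k]).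
Proof.
apply: uniq_perm; first exact: words_uniq.
  rewrite cons_uniq; apply/andP; split.
    by apply/allpairsP => -[[u j] /= [_ _ E]]; move: (f_equal size E); rewrite size_rcons.
  apply: allpairs_uniq; [exact: words_uniq|exact: enum_uniq|].
  by move=> [a b] [c d] _ _ /= /rcons_inj [-> ->].
case/lastP => [|w i]; first by rewrite mem_words !inE.
rewrite mem_words size_rcons ltnS in_cons /=.
have -> : (rcons w i == [::]) = false by rewrite -size_eq0 size_rcons.
apply/idP/allpairsP => [Hw|[[u j] /= [Hu _ /rcons_inj [-> _]]]]; last by rewrite -mem_words.
by exists (w, i); rewrite /= mem_enum mem_words.
Qed.

Lemma wt_bwd {R : realType} (p q : R) k t b (f : {ffun 'I_k -> outcome k t}) :
  wt p q t.+1 (Gbf b f) = (if b then p else 1 - p) * \prod_i wt p q t (look (f i)).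
Proof.
rewrite /wt (perm_big _ (words_perm k t)) big_cons /=.
congr (_ * _).
rewrite big_allpairs_dep /= exchange_big /= big_enum /=.
apply: eq_bigr => i _; apply: eq_bigr => w _.
by rewrite size_rcons eqSS Gbf_rcons.
Qed.

Lemma stateg_rcons k t b (f : {ffun 'I_k -> outcome k t}) w i s :
  stateg (Gbf b f) (rcons w i) s = stateg (look (f i)) w s.
Proof.
elim: s w => [|s IH] w /=; first exact: Gbf_rcons.
rewrite Gbf_rcons; congr (_ && majority _ _); apply: eq_map => j.
by rewrite -rcons_cons IH.
Qed.

Lemma rrp_step {R : realType} (p q : R) k t :
  root_red_prob p q k t.+1 = (1 - p) *
    \sum_(f : {ffun 'I_k -> outcome k t})
       (\prod_i weight p q (f i)) *
       (if majority k [seq state (f i) [::] t | i <- enum 'I_k] then 1 else 0).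
Proof.
rewrite /root_red_prob.
rewrite (reindex bwd); last by exists fwd => x _; [apply: bwdK | apply: fwdK].
transitivity (\sum_(bf : bool * {ffun 'I_k -> outcome k t})
   (wt p q t.+1 (Gbf bf.1 bf.2) *
     (if stateg (Gbf bf.1 bf.2) [::] t.+1 then 1 else 0))).
  apply: eq_bigr => -[b f] _.
  rewrite weight_wt state_g.
  have -> : look (bwd (b, f)) = Gbf b f by apply: funext => w; rewrite look_bwd.
  by [].
rewrite -(pair_bigA _ (fun b f => wt p q t.+1 (Gbf b f) *
     (if stateg (Gbf b f) [::] t.+1 then 1 else 0))) big_bool /=.
rewrite big1 ?add0r; last by move=> f _; rewrite mulr0.
rewrite mulr_sumr; apply: eq_bigr => f _.
rewrite wt_bwd /= -mulrA; congr (_ * (_ * _)).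
  by apply: eq_bigr => i _; rewrite weight_wt.
congr (if majority _ _ then _ else _); apply: eq_map => i.
by rewrite -[[:: i]]/(rcons [::] i) stateg_rcons state_g.
Qed.

Lemma count_card (T : finType) (P : pred T) : count P (enum T) = #|[set i | P i]|.
Proof.
have -> : [set i | P i] = [set x in P] by apply/setP => i; rewrite !inE.
by rewrite cardsE cardE -size_filter enumT /enum_mem.
Qed.

Lemma sum_prod_ffun {R : realType} (V : finType) (F : V -> bool -> R) :
  \sum_(om : {ffun V -> bool}) \prod_v F v (om v) = \prod_v (F v true + F v false).
Proof.
have -> : \prod_v (F v true + F v false) = \prod_v \sum_(b : bool) F v b.
  by apply: eq_bigr => v _; rewrite big_bool.
by rewrite bigA_distr_bigA. Qed.

Lemma maj_sets {R : realType} k (b : 'I_k -> bool) :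
  (if ((k.+1)./2 <= #|[set i | b i]|)%N then 1 else 0 : R) =
  \sum_(A : {set 'I_k}) (if ((k.+1)./2 <= #|A|)%N then 1 else 0) *
     \prod_i (if b i == (i \in A) then 1 else 0).
Proof.
rewrite (bigD1 [set i | b i]) //= big1 => [|i _]; last by rewrite inE eqxx.
rewrite mulr1 big1 ?addr0 // => A HA.
have [i Hi] : exists i, b i != (i \in A).
  apply/existsP; rewrite -negb_forall; apply: contra HA => /forallP H.
  by apply/eqP/setP => i; rewrite inE; apply/esym/eqP/H.
by rewrite (bigD1 i) //= (negbTE Hi) mul0r mulr0.
Qed.

Lemma binom_sum {R : realType} (X : finType) (W : X -> R) (S : X -> bool) k r :
  \sum_x W x = 1 -> \sum_x W x * (if S x then 1 else 0) = r ->
  \sum_(f : {ffun 'I_k -> X}) (\prod_i W (f i)) *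
     (if majority k [seq S (f i) | i <- enum 'I_k] then 1 else 0) = binom_tail k r.
Proof.
move=> HW Hr.
have E1 (f : {ffun 'I_k -> X}) : majority k [seq S (f i) | i <- enum 'I_k] =
    ((k.+1)./2 <= #|[set i | S (f i)]|)%N.
  by rewrite /majority count_map -count_card.
under eq_bigr do rewrite E1 maj_sets mulr_sumr.
rewrite exchange_big /=.
transitivity (\sum_(A : {set 'I_k}) (if ((k.+1)./2 <= #|A|)%N then 1 else 0) *
   (r ^+ #|A| * (1 - r) ^+ (k - #|A|))).
  apply: eq_bigr => A _.
  transitivity ((if ((k.+1)./2 <= #|A|)%N then 1 else 0) * \sum_(f : {ffun 'I_k -> X})
     \prod_i (W (f i) * (if S (f i) == (i \in A) then 1 else 0))).
    by rewrite mulr_sumr; apply: eq_bigr => f _; rewrite mulrCA big_split.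
  congr (_ * _).
  rewrite -(bigA_distr_bigA (fun i x => W x * (if S x == (i \in A) then 1 else 0))).
  rewrite (bigID (mem A)) /=.
  rewrite (eq_bigr (fun _ => r)) => [|i Hi]; last first.
    by rewrite Hi -Hr; apply: eq_bigr => x _; rewrite eqb_id.
  rewrite [X in _ * X](eq_bigr (fun _ => 1 - r)) => [|i Hi]; last first.
    have -> : 1 - r = \sum_x (W x - W x * (if S x then 1 else 0)) by rewrite sumrB HW Hr.
    rewrite (negbTE Hi); apply: eq_bigr => x _.
    by case: (S x); rewrite /= ?mulr1 ?mulr0 ?subr0 ?subrr.
  rewrite !prodr_const; congr (_ * _ ^+ _).
  have := cardC (mem A); rewrite card_ord.
  move: #|mem A| #|[predC mem A]| => a c HC.
  by rewrite -HC addKn.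
rewrite (partition_big (fun A : {set 'I_k} => (inord #|A| : 'I_k.+1)) predT) //=.
rewrite /binom_tail [RHS]big_mkcond /=; apply: eq_bigr => j _.
rewrite (eq_bigl (fun A : {set 'I_k} => #|A| == j)) => [|A]; last first.
  rewrite -(inj_eq val_inj) /= inordK // ltnS.
  by have := max_card (mem A); rewrite card_ord.
rewrite (eq_bigr (fun _ => (if ((k.+1)./2 <= j)%N then 1 else 0) *
   (r ^+ j * (1 - r) ^+ (k - j)))) => [|A /eqP ->] //.
rewrite sumr_const.
have -> : #|[pred A : {set 'I_k} | #|A| == j]| = 'C(k, j).
  have := card_draws 'I_k j; rewrite card_ord => <-.
  by apply: eq_card => A; rewrite !inE.
case: ifP => _; last by rewrite mul0r mul0rn.
by rewrite -mulr_natl; ring.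
Qed.

Lemma weight_sum {R : realType} (p q : R) k t : \sum_(om : outcome k t) weight p q om = 1.
Proof.
rewrite /weight (@sum_prod_ffun R _ (fun v b =>
  if size (val v) == t then (if b then q else 1 - q) else (if b then p else 1 - p))).
by apply: big1 => v _; case: ifP => _; rewrite addrC subrK.
Qed.

Lemma rrp_rec {R : realType} (p q : R) k t :
  root_red_prob p q k t.+1 = hatF_pk p k (root_red_prob p q k t).
Proof.
rewrite rrp_step /hatF_pk; congr (_ * _).
exact: (@binom_sum R (outcome k t) (@weight R p q k t) (fun om => state om [::] t) k _ (weight_sum p q k t) erefl).
Qed.

Lemma rrp0 {R : realType} (p q : R) k : root_red_prob p q k 0 = q.
Proof.
rewrite /root_red_prob.
transitivity (\sum_(om : outcome k 0) \prod_(v : vert k 0)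
  (fun w b => (if size w == 0%N then (if b then q else 1 - q) else (if b then p else 1 - p))
     * (if b then 1 else 0)) (val v) (om v)).
  apply: eq_bigr => om _; rewrite /weight big_split /=; congr (_ * _).
  rewrite (eq_bigr (fun v => if look om (val v) then 1 else 0)) => [|v _]; last by rewrite look_val.
  by rewrite (@big_vert R 1 *%R k 0 (fun w => if look om w then 1 else 0)) /= big_seq1.
pose G := fun (w : seq 'I_k) (b : bool) => (if size w == 0%N then (if b then q else 1 - q) else (if b then p else 1 - p))
     * (if b then 1 else 0) : R.
rewrite (@sum_prod_ffun R _ (fun v b => G (val v) b)).
rewrite (@big_vert R 1 *%R k 0 (fun w => G w true + G w false)) /= big_seq1 /G /=.
by rewrite mulr1 mulr0 addr0.
Qed.
Local Open Scope classical_set_scope.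

Lemma iter_cvg {R : realType} (f : R -> R) (u : nat -> R) lo hi :
  continuous f -> (forall n, u n.+1 = f (u n)) -> (forall n, lo <= u n <= hi) ->
  ((forall n, u n <= u n.+1) \/ (forall n, u n.+1 <= u n)) ->
  exists L, u @ \oo --> L /\ f L = L /\ lo <= L <= hi.
Proof.
move=> cf Hu Hb Hm.
have cu : cvgn u.
  case: Hm => Hm.
    apply: nondecreasing_is_cvgn; first exact/nondecreasing_seqP.
    by exists hi => _ [n _ <-]; case/andP: (Hb n).
  apply: nonincreasing_is_cvgn; first exact/nonincreasing_seqP.
  by exists lo => _ [n _ <-]; case/andP: (Hb n).
exists (limn u); split => //; split.
  have h1 : (fun n => u n.+1) @ \oo --> limn u by rewrite (cvg_shiftS u).
  have h2 : (f \o u) @ \oo --> f (limn u) by apply: continuous_cvg => //; exact: cf.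
  have E : (fun n => u n.+1) = f \o u by apply: funext => n; rewrite Hu.
  rewrite E in h1; exact: (cvg_unique _ h2 h1).
apply/andP; split.
  by apply: limr_ge => //; near=> n; case/andP: (Hb n).
by apply: limr_le => //; near=> n; case/andP: (Hb n).
Unshelve. all: by end_near.
Qed.

Lemma B_ge0 {R : realType} k (x : R) : 0 <= x <= 1 -> 0 <= binom_tail k x.
Proof.
case/andP => x0 x1; apply: sumr_ge0 => i _.
by rewrite !mulr_ge0 ?exprn_ge0 // subr_ge0.
Qed.

Lemma B_rep {R : realType} k (x : R) : binom_tail k x =
  \sum_(f : {ffun 'I_k -> bool}) (\prod_i (if f i then x else 1 - x)) *
     (if majority k [seq f i | i <- enum 'I_k] then 1 else 0).
Proof.
symmetry; apply: (@binom_sum R bool (fun b => if b then x else 1 - x) id).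
  by rewrite big_bool /=; ring.
by rewrite big_bool /=; ring.
Qed.

Lemma B_le1 {R : realType} k (x : R) : 0 <= x <= 1 -> binom_tail k x <= 1.
Proof.
case/andP => x0 x1; rewrite B_rep.
have W0 : forall b : bool, 0 <= (if b then x else 1 - x) by case => //; rewrite subr_ge0.
apply: (@le_trans _ _ (\sum_(f : {ffun 'I_k -> bool}) \prod_i (if f i then x else 1 - x))).
  apply: ler_sum => f _; apply: ler_piMr; first exact: prodr_ge0.
  by case: ifP.
rewrite -(bigA_distr_bigA (fun _ (b : bool) => if b then x else 1 - x)).
by rewrite big1 // => i _; rewrite big_bool /=; ring.
Qed.

Lemma B_mono {R : realType} k (x y : R) : 0 <= x -> x <= y -> y <= 1 ->
  binom_tail k x <= binom_tail k y.
Proof.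
move=> x0 xy y1.
pose W := fun i : 'I_3 => if (i == 0 :> nat) then x else if (i == 1 :> nat) then y - x else 1 - y.
have W0 : forall i, 0 <= W i.
  by move=> i; rewrite /W; case: ifP => _; [|case: ifP => _]; rewrite ?subr_ge0.
have WS : \sum_i W i = 1 by rewrite !big_ord_recl big_ord0 /W /=; ring.
rewrite -(@binom_sum R _ W (fun i => (i == 0 :> nat)) k x WS); last first.
  by rewrite !big_ord_recl big_ord0 /W /=; ring.
rewrite -(@binom_sum R _ W (fun i => (i < 2)%N) k y WS); last first.
  by rewrite !big_ord_recl big_ord0 /W /=; ring.
apply: ler_sum => f _; apply: ler_wpM2l; first exact: prodr_ge0.
case: ifP => H; last by case: ifP.
rewrite ifT //; move: H; rewrite /majority !count_map => H.
apply: (leq_trans H); apply: sub_count => i /=; by move/eqP => ->.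
Qed.

Lemma uphalf_le k : (0 < k)%N -> ((k.+1)./2 <= k)%N.
Proof.
move=> k0; rewrite -{2}(doubleK k); apply: half_leq.
by rewrite -addnn -addn1 leq_add2l.
Qed.

Lemma B_pos {R : realType} k (x : R) : (0 < k)%N -> 0 < x <= 1 -> 0 < binom_tail k x.
Proof.
move=> k0 /andP [x0 x1]; rewrite /binom_tail (bigD1 ord_max) /=; last exact: uphalf_le.
have Ha : 0 < 'C(k, k)%:R * x ^+ k * (1 - x) ^+ (k - k) :> R.
  by rewrite binn subnn expr0 mulr1 mul1r exprn_gt0.
have Hb : 0 <= \sum_(i < k.+1 | ((k.+1)./2 <= i)%N && (i != ord_max))
     'C(k, i)%:R * x ^+ i * (1 - x) ^+ (k - i) :> R.
  by have x0w := ltW x0; apply: sumr_ge0 => i _; rewrite !mulr_ge0 ?exprn_ge0 // subr_ge0.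
lra.
Qed.

Lemma B0 {R : realType} k : (0 < k)%N -> binom_tail k (0 : R) = 0.
Proof.
move=> k0; apply: big1 => i Hi.
have : (0 < i)%N by apply: leq_trans Hi; rewrite -[1%N]/((2)./2); apply: half_leq.
by case: (nat_of_ord i) => // n _; rewrite expr0n /= mulr0 mul0r.
Qed.

Lemma B_sq {R : realType} k (x : R) : (3 <= k)%N -> 0 <= x <= 1 ->
  binom_tail k x <= (\sum_(i < k.+1) ('C(k, i))%:R) * x ^+ 2.
Proof.
move=> k3 /andP [x0 x1]; rewrite mulr_suml /binom_tail.
apply: (@le_trans _ _ (\sum_(i < k.+1 | ((k.+1)./2 <= i)%N) 'C(k, i)%:R * x ^+ 2)).
  apply: ler_sum => i Hi.
  have i2 : (2 <= i)%N.
    apply: leq_trans Hi; rewrite -[2%N]/((4)./2); exact: half_leq.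
  rewrite -mulrA; apply: ler_wpM2l => //.
  rewrite -(subnKC i2) exprD -mulrA; apply: ler_piMr; first exact: exprn_ge0.
  by apply: mulr_ile1; rewrite ?exprn_ge0 ?exprn_ile1 ?subr_ge0 // lerBlDr lerDl.
rewrite [X in _ <= X](bigID (fun i : 'I_k.+1 => ((k.+1)./2 <= i)%N)) /= lerDl.
by apply: sumr_ge0 => i _; rewrite mulr_ge0 ?exprn_ge0.
Qed.

Definition Bpoly {R : realType} k : {poly R} :=
  \sum_(i < k.+1 | ((k.+1)./2 <= i)%N) ('C(k, i))%:R%:P * 'X^i * (1 - 'X) ^+ (k - i).

Lemma B_horner {R : realType} k (x : R) : binom_tail k x = (Bpoly k).[x].
Proof.
rewrite /Bpoly horner_sum; apply: eq_bigr => i _.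
by rewrite !hornerE.
Qed.

Lemma g_cont {R : realType} (p : R) k : continuous (fun x : R => hatF_pk p k x - x).
Proof.
have -> : (fun x : R => hatF_pk p k x - x) = horner ((1 - p)%:P * Bpoly k - 'X).
  by apply: funext => x; rewrite /hatF_pk B_horner !hornerE.
exact: continuous_horner.
Qed.

Lemma hF_cont {R : realType} (p : R) k : continuous (hatF_pk p k).
Proof.
have -> : hatF_pk p k = horner ((1 - p)%:P * Bpoly k).
  by apply: funext => x; rewrite /hatF_pk B_horner !hornerE.
exact: continuous_horner.
Qed.

Lemma hF_mono {R : realType} (p : R) k x y : p <= 1 -> 0 <= x -> x <= y -> y <= 1 ->
  hatF_pk p k x <= hatF_pk p k y.
Proof.
move=> p1 x0 xy y1; rewrite /hatF_pk; apply: ler_wpM2l; first by rewrite subr_ge0.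
exact: B_mono.
Qed.

Lemma hF_range {R : realType} (p : R) k x : 0 <= p <= 1 -> 0 <= x <= 1 ->
  0 <= hatF_pk p k x <= 1.
Proof.
move=> /andP [p0 p1] Hx; have := @B_ge0 R k x Hx; have := @B_le1 R k x Hx.
rewrite /hatF_pk => H1 H0; apply/andP; split; nra.
Qed.

Lemma iter_conv {R : realType} (p q : R) k (lo hi L0 : R) :
  0 <= lo -> hi <= 1 -> lo <= q <= hi ->
  (forall x, lo <= x <= hi -> lo <= hatF_pk p k x <= hi) ->
  ((forall x, lo <= x <= hi -> x <= hatF_pk p k x) \/
   (forall x, lo <= x <= hi -> hatF_pk p k x <= x)) ->
  (forall x, lo <= x <= hi -> hatF_pk p k x = x -> x = L0) ->
  (fun t => root_red_prob p q k t) @ \oo --> L0.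
Proof.
move=> lo0 hi1 Hq Hmap Hmono Hfix.
have Hb : forall n, lo <= root_red_prob p q k n <= hi.
  by elim => [|n IH]; rewrite ?rrp0 // rrp_rec; apply: Hmap.
have [L [HL [HfL HLb]]] := @iter_cvg R (hatF_pk p k) (fun t => root_red_prob p q k t) lo hi
  (hF_cont p k) (fun n => rrp_rec p q k n) Hb
  (ltac:(case: Hmono => H; [left|right] => n; rewrite rrp_rec; exact: H)).
by rewrite -(Hfix L HLb HfL).
Qed.

Lemma ivt_fix {R : realType} (p : R) k a b : a <= b ->
  ((hatF_pk p k a - a <= 0 /\ 0 <= hatF_pk p k b - b) \/
   (hatF_pk p k b - b <= 0 /\ 0 <= hatF_pk p k a - a)) ->
  exists c, a <= c <= b /\ hatF_pk p k c = c.
Proof.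
move=> ab H.
have H0 : Num.min (hatF_pk p k a - a) (hatF_pk p k b - b) <= 0 <=
          Num.max (hatF_pk p k a - a) (hatF_pk p k b - b).
  by rewrite ge_min le_max; case: H => -[-> ->]; rewrite ?orbT.
have [c Hc Hgc] := @IVT R (fun x => hatF_pk p k x - x) a b 0 ab
   (continuous_subspaceT (g_cont p k)) H0.
exists c; split; first by move: Hc; rewrite in_itv.
by apply/eqP; rewrite -subr_eq0 Hgc.
Qed.

Theorem theorem4p6_aux (R : realType) (k : nat) (p q pstar : R) :
  odd k -> (3 <= k)%N ->
  0 <= p <= 1 -> 0 <= q <= 1 ->
  is_pstar k pstar ->
  (p < pstar ->
     forall phim phip : R,
       0 < phim < phip ->
       (forall x : R, ((0 <= x <= 1) /\ hatF_pk p k x = x) <->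
                      (x = 0 \/ x = phim \/ x = phip)) ->
       (phim < q -> (fun t : nat => root_red_prob p q k t) @ \oo --> phip) /\
       (q < phim -> (fun t : nat => root_red_prob p q k t) @ \oo --> 0)) /\
  (pstar < p -> (fun t : nat => root_red_prob p q k t) @ \oo --> 0).
Proof.
move=> kodd k3 /andP [p0 p1] /andP [q0 q1] Hps.
have k0 : (0 < k)%N by apply: leq_trans k3.
case: Hps => /andP [ps1 ps2] [Hlt [_ Hgt]].
have hF0 : hatF_pk p k 0 = 0 by rewrite /hatF_pk B0 // mulr0.
have hFr : forall x, 0 <= x <= 1 -> 0 <= hatF_pk p k x <= 1.
  by move=> x Hx; apply: hF_range => //; apply/andP.
split.
- move=> ppst phim phip /andP [phim0 phimp] H.
  have Hfix : forall x, 0 <= x <= 1 -> hatF_pk p k x = x -> x = 0 \/ x = phim \/ x = phip.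
    by move=> x Hx Hf; apply/H.
  have [/andP [phip0 phip1] fphip] : 0 <= phip <= 1 /\ hatF_pk p k phip = phip.
    by apply/H; right; right.
  have [/andP [_ phim1] fphim] : 0 <= phim <= 1 /\ hatF_pk p k phim = phim.
    by apply/H; right; left.
  pose C := \sum_(i < k.+1) ('C(k, i))%:R : R.
  have C1 : 1 <= C.
    rewrite /C big_ord_recl bin0 lerDl; apply: sumr_ge0 => i _; exact: ler0n.
  have F2 : forall x, 0 < x < phim -> hatF_pk p k x - x < 0.
    move=> x /andP [x0 xm]; rewrite ltNge; apply/negP => gx.
    pose y := x / (C + 1).
    have Cp : 0 < C + 1 by lra.
    have y0 : 0 < y by rewrite divr_gt0 // ?ltr_pwDl.
    have Ey : y * (C + 1) = x by rewrite /y divfK // gt_eqF.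
    have x1 : x <= 1 by lra.
    have yx : y <= x by nra.
    have Cy : C * y < 1 by nra.
    have gy : hatF_pk p k y - y < 0.
      have Hy : 0 <= y <= 1 by apply/andP; split; lra.
      have := @B_sq R k y k3 Hy; have := @B_ge0 R k y Hy; rewrite /hatF_pk -/C.
      nra.
    have [c [Hc Hfc]] := @ivt_fix R p k y x yx (or_introl (conj (ltW gy) gx)).
    have Hc' : 0 <= c <= 1 by apply/andP; split; lra.
    by case: (Hfix c Hc' Hfc) => [|[|]] E; lra.
  have F2' : forall x, 0 <= x < phim -> hatF_pk p k x <= x.
    move=> x /andP [x0 xm]; case: (x =P 0) => [->|xn0]; first by rewrite hF0.
    have : 0 < x < phim by apply/andP; split => //; rewrite lt_neqAle eq_sym; apply/andP; split => //; apply/eqP.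
    by move/F2; lra.
  have F3 : forall x, phip <= x <= 1 -> hatF_pk p k x <= x.
    move=> x /andP [x0 x1]; rewrite leNgt; apply/negP => gx.
    have g1 : hatF_pk p k 1 - 1 <= 0.
      have := hFr 1 (ltac:(apply/andP; split; lra)); lra.
    have gx' : 0 <= hatF_pk p k x - x by lra.
    have [c [Hc Hfc]] := @ivt_fix R p k x 1 x1 (or_intror (conj g1 gx')).
    have Hc' : 0 <= c <= 1 by apply/andP; split; lra.
    case: (Hfix c Hc' Hfc) => [|[|]] E; try lra.
    have xe : x = phip by lra.
    by rewrite xe fphip in gx; lra.
  have F4 : forall x, phim < x <= phip -> x <= hatF_pk p k x.
    move=> x /andP [x0 x1]; case: (x =P phip) => [->|xn]; first by rewrite fphip.
    have xp : x < phip by rewrite lt_neqAle x1 andbT; apply/eqP.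
    rewrite leNgt; apply/negP => gx.
    have Hall : forall z, 0 < z <= 1 -> hatF_pk p k z <= z.
      move=> z /andP [z0 z1].
      case: (ltP z phim) => zm; first by have := F2 z (ltac:(apply/andP; split => //)); lra.
      case: (lerP phip z) => zp; first by apply: F3; apply/andP.
      case: (z =P phim) => [->|zn]; first by rewrite fphim.
      have zm' : phim < z by rewrite lt_neqAle zm andbT; apply/eqP => E; apply: zn.
      rewrite leNgt; apply/negP => gz.
      have g1 : hatF_pk p k x - x <= 0 by lra.
      have g2 : 0 <= hatF_pk p k z - z by lra.
      have [c [Hc3 Hc4 Hfc]] : exists c, [/\ phim < c, c < phip & hatF_pk p k c = c].
        case: (lerP z x) => zx.
          have [c [/andP [Hc1 Hc2] Hfc]] := @ivt_fix R p k z x zx (or_intror (conj g1 g2)).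
          by exists c; split => //; lra.
        have [c [/andP [Hc1 Hc2] Hfc]] := @ivt_fix R p k x z (ltW zx) (or_introl (conj g1 g2)).
        by exists c; split => //; lra.
      have Hc' : 0 <= c <= 1 by apply/andP; split; lra.
      by case: (Hfix c Hc' Hfc) => [|[|]] E; lra.
    pose p' := (p + pstar) / 2.
    have [s [us [ss Hs]]] := Hlt p' (ltac:(apply/andP; split; rewrite /p'; lra)).
    have [y0 y0s y0n] : exists2 y0, y0 \in s & y0 != 0.
      move: us ss; case: s Hs => [|a [|b [|c [|]]]] //= Hs us _.
      case: (a =P 0) => [a0|an]; last by exists a; rewrite ?inE ?eqxx //; apply/eqP.
      exists b; first by rewrite !inE eqxx orbT.
      by move: us; rewrite !inE a0 => /andP [/norP [H1 _] _]; rewrite eq_sym.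
    have [/andP [y00 y01] Fy] := (proj2 (Hs y0)) y0s.
    have y0p : 0 < y0 by rewrite lt_neqAle eq_sym y0n.
    have Hy : 0 < (1 - p') * y0 <= 1 by apply/andP; split; rewrite /p'; nra.
    have := Hall _ Hy; rewrite /hatF_pk; move: Fy; rewrite /F_pk => ->.
    rewrite /p'; nra.
  split.
  + move=> qm; case: (lerP phip q) => Hq.
      apply: (@iter_conv R p q k phip 1 phip) => //; first by apply/andP.
      * move=> x /andP [x0 x1]; apply/andP; split.
          by rewrite -[X in X <= _]fphip; apply: hF_mono => //.
        by case/andP: (hFr x (ltac:(apply/andP; split; lra))).
      * by right => x Hx; apply: F3.
      * move=> x /andP [x0 x1] Hf; have Hx : 0 <= x <= 1 by apply/andP; split; lra.
        by case: (Hfix x Hx Hf) => [|[|]] E; lra.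
    apply: (@iter_conv R p q k q phip phip) => //; first by apply/andP; split; lra.
    * move=> x /andP [x0 x1]; apply/andP; split.
        by apply: (le_trans x0); apply: F4; apply/andP; split; lra.
      by rewrite -[X in _ <= X]fphip; apply: hF_mono => //; lra.
    * by left => x /andP [x0 x1]; apply: F4; apply/andP; split; lra.
    * move=> x /andP [x0 x1] Hf; have Hx : 0 <= x <= 1 by apply/andP; split; lra.
      by case: (Hfix x Hx Hf) => [|[|]] E; lra.
  + move=> qm.
    apply: (@iter_conv R p q k 0 q 0) => //; first by apply/andP.
    * move=> x /andP [x0 x1]; apply/andP; split.
        by case/andP: (hFr x (ltac:(apply/andP; split; lra))).
      by apply: (le_trans _ x1); apply: F2'; apply/andP; split; lra.
    * by right => x /andP [x0 x1]; apply: F2'; apply/andP; split; lra.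
    * move=> x /andP [x0 x1] Hf; have Hx : 0 <= x <= 1 by apply/andP; split; lra.
      by case: (Hfix x Hx Hf) => [|[|]] E; lra.
- move=> ppst.
  have Hfix0 : forall x, 0 <= x <= 1 -> hatF_pk p k x = x -> x = 0.
    move=> x Hx Hf; case: (p =P 1) => [pe|pn].
      by move: Hf; rewrite /hatF_pk pe subrr mul0r => <-.
    have pn' : 1 - p != 0 by rewrite subr_eq0 eq_sym; apply/eqP.
    have Hr : 0 <= binom_tail k x <= 1 by rewrite B_ge0 ?B_le1.
    have FE : F_pk p k (binom_tail k x) = binom_tail k x by rewrite /F_pk -/(hatF_pk p k x) Hf.
    have := (proj1 (Hgt p (ltac:(apply/andP; split; lra)) (binom_tail k x))) (conj Hr FE).
    by move=> Bx0; rewrite -Hf /hatF_pk Bx0 mulr0.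
  have Hge : forall x, 0 <= x <= 1 -> hatF_pk p k x <= x.
    move=> x /andP [x0 x1]; rewrite leNgt; apply/negP => gx.
    have g1 : hatF_pk p k 1 - 1 <= 0.
      have := hFr 1 (ltac:(apply/andP; split; lra)); lra.
    have gx' : 0 <= hatF_pk p k x - x by lra.
    have [c [Hc Hfc]] := @ivt_fix R p k x 1 x1 (or_intror (conj g1 gx')).
    have Hc' : 0 <= c <= 1 by apply/andP; split; lra.
    have c0 := Hfix0 c Hc' Hfc.
    have xe : x = 0 by lra.
    by rewrite xe hF0 in gx; lra.
  apply: (@iter_conv R p q k 0 1 0) => //; first by apply/andP.
  by right.
Qed.

End Helpers.

Theorem theorem4p6 (R : realType) (k : nat) (p q pstar : R) :
  odd k -> (3 <= k)%N ->
  0 <= p <= 1 -> 0 <= q <= 1 ->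
  is_pstar k pstar ->
  (p < pstar ->
     forall phim phip : R,
       0 < phim < phip ->
       (forall x : R, ((0 <= x <= 1) /\ hatF_pk p k x = x) <->
                      (x = 0 \/ x = phim \/ x = phip)) ->
       (phim < q -> (fun t : nat => root_red_prob p q k t) @ \oo --> (phip : R^o)) /\
       (q < phim -> (fun t : nat => root_red_prob p q k t) @ \oo --> (0 : R^o))) /\
  (pstar < p -> (fun t : nat => root_red_prob p q k t) @ \oo --> (0 : R^o)).
Proof.
exact: Helpers.theorem4p6_aux.
Qed.
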